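(* Let $F$ be a quantifier-free formula and let $\mathbf c$ be a finite set of object constants containing every object constant occurring in $F$. Then the formula $F^*(\mathbf e_{\mathbf c})\rightarrow\mathit{in}_{\mathbf c}(\mathrm{RV}(F))$ is logically valid.
   Context: Formulas are first-order formulas with object constants, predicate constants and equality but no function constants of arity $>0$; primitive connectives are $\bot,\land,\lor,\rightarrow$ ($\neg F$ is $F\rightarrow\bot$, $\top$ is $\bot\rightarrow\bot$). Let $\mathbf p=p_1,\dots,p_n$ be the predicate constants occurring in $F$ and $\mathbf u=u_1,\dots,u_n$ predicate variables of matching arities. $F^*(\mathbf u)$ is defined recursively: $p_i(\mathbf t)^*=u_i(\mathbf t)$; $(t_1=t_2)^*=(t_1=t_2)$; $\bot^*=\bot$; $(G\land H)^*=G^*\land H^*$; $(G\lor H)^*=G^*\lor H^*$; $(G\rightarrow H)^*=(G^*\rightarrow H^* )\land(G\rightarrow H)$; $(\forall xG)^*=\forall xG^*$; $(\exists xG)^*=\exists xG^*$. For a finite set $\mathbf c$ of object constants, $\mathit{in}_{\mathbf c}(x_1,\dots,x_m)$ denotes $\bigwedge_{1\le j\le m}\bigvee_{c\in\mathbf c}x_j=c$; for a finite set $V$ of variables, $\mathit{in}_{\mathbf c}(V)$ denotes $\mathit{in}_{\mathbf c}$ applied to the variables of $V$ (the empty conjunction being $\top$). $\mathbf e_{\mathbf c}$ denotes the list of predicate expressions $\lambda\mathbf x(p_i(\mathbf x)\land\mathit{in}_{\mathbf c}(\mathbf x))$, and $F^*(\mathbf e_{\mathbf c})$ is the result of replacing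 each atomic part $u_i(\mathbf t)$ of $F^*(\mathbf u)$ by $p_i(\mathbf t)\land\mathit{in}_{\mathbf c}(\mathbf t)$. Restricted variables: $\mathrm{RV}(F)$ for quantifier-free $F$: if $F$ is an equality between two variables, $\mathrm{RV}(F)=\emptyset$; if $F$ is any other atomic formula, $\mathrm{RV}(F)$ is the set of variables occurring in $F$; $\mathrm{RV}(\bot)=\emptyset$; $\mathrm{RV}(G\land H)=\mathrm{RV}(G)\cup\mathrm{RV}(H)$; $\mathrm{RV}(G\lor H)=\mathrm{RV}(G)\cap\mathrm{RV}(H)$; $\mathrm{RV}(G\rightarrow H)=\emptyset$. *)

(* Defs.v *)
From Stdlib Require Import List Arith.
Import ListNotations.

Inductive term : Type :=
| TVar : nat -> term
| TConst : nat -> term.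

Inductive formula : Type :=
| FBot : formula
| FEq : term -> term -> formula
| FPred : nat -> list term -> formula
| FPVar : nat -> list term -> formula
| FAnd : formula -> formula -> formula
| FOr : formula -> formula -> formula
| FImp : formula -> formula -> formula
| FAll : nat -> formula -> formula
| FEx : nat -> formula -> formula.

Definition FTop : formula := FImp FBot FBot.

Fixpoint bigAnd (l : list formula) : formula :=
  match l with [] => FTop | [f] => f | f :: l' => FAnd f (bigAnd l') end.
Fixpoint bigOr (l : list formula) : formula :=
  match l with [] => FBot | [f] => f | f :: l' => FOr f (bigOr l') end.

Definition in_c (c : list nat) (ts : list term) : formula :=
  bigAnd (map (fun t => bigOr (map (fun k => FEq t (TConst k)) c)) ts).

Definition in_c_vars (c : list nat) (V : list nat) : formula :=
  in_c c (map TVar V).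

Fixpoint star (F : formula) : formula :=
  match F with
  | FBot => FBot
  | FEq t1 t2 => FEq t1 t2
  | FPred i ts => FPVar i ts
  | FPVar i ts => FPVar i ts
  | FAnd G H => FAnd (star G) (star H)
  | FOr G H => FOr (star G) (star H)
  | FImp G H => FAnd (FImp (star G) (star H)) (FImp G H)
  | FAll x G => FAll x (star G)
  | FEx x G => FEx x (star G)
  end.

(* Substituting the predicate expressions e_c = \x (p_i(x) /\ in_c(x)) for the u_i:
   each atomic part u_i(t) becomes p_i(t) /\ in_c(t). *)
Fixpoint subst_e (c : list nat) (F : formula) : formula :=
  match F with
  | FPVar i ts => FAnd (FPred i ts) (in_c c ts)
  | FAnd G H => FAnd (subst_e c G) (subst_e c H)
  | FOr G H => FOr (subst_e c G) (subst_e c H)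
  | FImp G H => FImp (subst_e c G) (subst_e c H)
  | FAll x G => FAll x (subst_e c G)
  | FEx x G => FEx x (subst_e c G)
  | _ => F
  end.

Definition star_e (c : list nat) (F : formula) : formula := subst_e c (star F).

(* Formulas of the object language: no predicate variables. Quantifier-free ones. *)
Fixpoint qf (F : formula) : Prop :=
  match F with
  | FBot | FEq _ _ | FPred _ _ => True
  | FPVar _ _ => False
  | FAnd G H | FOr G H | FImp G H => qf G /\ qf H
  | FAll _ _ | FEx _ _ => False
  end.

Definition term_consts (t : term) : list nat :=
  match t with TVar _ => [] | TConst k => [k] end.
Definition term_vars (t : term) : list nat :=
  match t with TVar x => [x] | TConst _ => [] end.

Fixpoint consts (F : formula) : list nat :=
  match F with
  | FBot => []
  | FEq t1 t2 => term_consts t1 ++ term_consts t2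
  | FPred _ ts | FPVar _ ts => flat_map term_consts ts
  | FAnd G H | FOr G H | FImp G H => consts G ++ consts H
  | FAll _ G | FEx _ G => consts G
  end.

(* Restricted variables RV(F) for quantifier-free F (as a list; order/duplicates irrelevant). *)
Fixpoint RV (F : formula) : list nat :=
  match F with
  | FBot => []
  | FEq (TVar _) (TVar _) => []
  | FEq t1 t2 => term_vars t1 ++ term_vars t2
  | FPred _ ts | FPVar _ ts => flat_map term_vars ts
  | FAnd G H => RV G ++ RV H
  | FOr G H => filter (fun x => existsb (Nat.eqb x) (RV H)) (RV G)
  | FImp _ _ => []
  | FAll _ _ | FEx _ _ => [] (* not used: RV is only defined for quantifier-free F *)
  end.

Record structure := {
  dom : Type;
  dom_inhabited : dom;
  iconst : nat -> dom;
  ipred : nat -> list dom -> Prop;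
  ipvar : nat -> list dom -> Prop
}.

Definition eval_term (M : structure) (v : nat -> dom M) (t : term) : dom M :=
  match t with TVar x => v x | TConst k => iconst M k end.

Definition update {D : Type} (v : nat -> D) (x : nat) (d : D) : nat -> D :=
  fun y => if Nat.eqb y x then d else v y.

Fixpoint sat (M : structure) (v : nat -> dom M) (F : formula) : Prop :=
  match F with
  | FBot => False
  | FEq t1 t2 => eval_term M v t1 = eval_term M v t2
  | FPred i ts => ipred M i (map (eval_term M v) ts)
  | FPVar i ts => ipvar M i (map (eval_term M v) ts)
  | FAnd G H => sat M v G /\ sat M v H
  | FOr G H => sat M v G \/ sat M v H
  | FImp G H => sat M v G -> sat M v H
  | FAll x G => forall d : dom M, sat M (update v x d) G
  | FEx x G => exists d : dom M, sat M (update v x d) G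
  end.

Definition valid (F : formula) : Prop :=
  forall (M : structure) (v : nat -> dom M), sat M v F.

(* Main.v *)
Require Import Defs.
From Stdlib Require Import List.
Import ListNotations.

Lemma sat_bigAnd M v l : (forall f, In f l -> sat M v f) -> sat M v (bigAnd l).
Proof.
  induction l as [|f l IH]; intro H; simpl; [tauto|].
  destruct l as [|g l']; [apply H; simpl; auto|].
  split; [apply H; simpl; auto|]. apply IH; intros; apply H; simpl in *; tauto.
Qed.

Lemma bigAnd_sat M v l : sat M v (bigAnd l) -> forall f, In f l -> sat M v f.
Proof.
  induction l as [|f l IH]; intros H g Hg; [destruct Hg|].
  destruct l as [|h l'].
  - destruct Hg as [<-|[]]; exact H.
  - destruct H as [H1 H2]. destruct Hg as [<-|Hg]; [exact H1|]. apply IH; auto.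
Qed.

Lemma sat_bigOr M v l f : In f l -> sat M v f -> sat M v (bigOr l).
Proof.
  induction l as [|g l IH]; intros Hf Hs; [destruct Hf|].
  destruct l as [|h l'].
  - destruct Hf as [<-|[]]; exact Hs.
  - simpl. destruct Hf as [<-|Hf]; [left; exact Hs|]. right; apply IH; auto.
Qed.

Lemma bigOr_sat M v l : sat M v (bigOr l) -> exists f, In f l /\ sat M v f.
Proof.
  induction l as [|g l IH]; intros H; [destruct H|].
  destruct l as [|h l'].
  - exists g; simpl; auto.
  - destruct H as [H|H]; [exists g; simpl; auto|].
    destruct (IH H) as [f [Hf Hs]]; exists f; simpl in *; tauto.
Qed.

Definition good (M : structure) (v : nat -> dom M) (c : list nat) (x : nat) :=
  exists k, In k c /\ v x = iconst M k.

Lemma in_c_sat M v c ts : sat M v (in_c c ts) ->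
  forall t, In t ts -> exists k, In k c /\ eval_term M v t = iconst M k.
Proof.
  unfold in_c; intros H t Ht.
  pose proof (bigAnd_sat _ _ _ H _ (in_map _ _ _ Ht)) as H1.
  destruct (bigOr_sat _ _ _ H1) as [f [Hf Hs]].
  apply in_map_iff in Hf. destruct Hf as [k [<- Hk]]. exists k; split; auto.
Qed.

Lemma main M v c F : qf F -> (forall k, In k (consts F) -> In k c) ->
  sat M v (subst_e c (star F)) -> forall x, In x (RV F) -> good M v c x.
Proof.
  induction F; simpl; intros Hq Hc Hs x Hx; try tauto.
  - destruct t as [a|a], t0 as [b|b]; simpl in *; try tauto.
    + destruct Hx as [<-|[]]. exists b; split; auto.
    + destruct Hx as [<-|[]]. exists a; split; auto.
  - destruct Hs as [_ Hs]. apply in_flat_map in Hx. destruct Hx as [t [Ht Hx]].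
    destruct t as [y|y]; simpl in Hx; [|destruct Hx]. destruct Hx as [<-|[]].
    destruct (in_c_sat _ _ _ _ Hs _ Ht) as [k [Hk E]]. exists k; auto.
  - destruct Hq, Hs. apply in_app_or in Hx. destruct Hx.
    + apply IHF1; auto. intros; apply Hc, in_or_app; auto.
    + apply IHF2; auto. intros; apply Hc, in_or_app; auto.
  - destruct Hq. apply filter_In in Hx. destruct Hx as [Hx1 Hx2].
    destruct Hs.
    + apply IHF1; auto. intros; apply Hc, in_or_app; auto.
    + apply IHF2; auto. intros; apply Hc, in_or_app; auto.
      apply existsb_exists in Hx2. destruct Hx2 as [y [Hy E]].
      apply PeanoNat.Nat.eqb_eq in E; subst; auto.
Qed.

Theorem lemma2 (F : formula) (c : list nat) :
  qf F ->
  (forall k, In k (consts F) -> In k c) ->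
  valid (FImp (star_e c F) (in_c_vars c (RV F))).
Proof.
  intros Hq Hc M v Hs. unfold in_c_vars, in_c. apply sat_bigAnd.
  intros f Hf. rewrite map_map in Hf. apply in_map_iff in Hf.
  destruct Hf as [x [<- Hx]].
  destruct (main M v c F Hq Hc Hs x Hx) as [k [Hk E]].
  apply (sat_bigOr _ _ _ (FEq (TVar x) (TConst k))).
  - apply in_map_iff; eauto.
  - exact E.
Qed.
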